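(* For a random threshold graph $G$ on $n\ge1$ vertices and every integer $d\ge0$, $$P(\mathrm{degen}(G)=d)=\left(\tfrac12\right)^{n-1}\binom{n-1}{d}.$$
   Context: A threshold graph on $n\ge1$ vertices is built from a base vertex $v_0$ by successively adding $v_1,\dots,v_{n-1}$, each either isolated (adjacent to no earlier vertex) or dominating (adjacent to all earlier vertices); its creation sequence $\mathrm{seq}(G)=s_1\cdots s_{n-1}$ has $s_i=1$ if $v_i$ is dominating and $s_i=0$ otherwise, and each unlabeled threshold graph on $n$ vertices corresponds to exactly one binary string of length $n-1$. A random threshold graph on $n$ vertices is one whose creation sequence is uniformly distributed over all $2^{n-1}$ binary strings of length $n-1$. The degeneracy $\mathrm{degen}(G)$ is the maximum over nonempty induced subgraphs $H$ of $G$ of the minimum degree of $H$. *)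

(* Defs.v *)
From mathcomp Require Import all_boot all_order all_algebra.
Set Implicit Arguments. Unset Strict Implicit. Unset Printing Implicit Defensive.

(* Threshold graph on vertices 'I_n = {v_0,...,v_(n-1)} built from the
   creation sequence s = s_1 ... s_(n-1), stored as the tuple
   [s_1; ...; s_(n-1)] (so s_i = nth false s i.-1).
   For i <> j, v_i ~ v_j iff v_(max i j) was added as dominating. *)
Definition tg_adj (n : nat) (s : (n.-1).-tuple bool) (i j : 'I_n) : bool :=
  (i != j) && nth false s (maxn i j).-1.

(* minimum degree of the induced subgraph on S (meaningful for S nonempty;
   the default #|S| exceeds every degree inside S) *)
Definition min_deg_in (n : nat) (adj : rel 'I_n) (S : {set 'I_n}) : nat :=
  \big[minn/#|S|]_(v in S) #|[set u in S | adj v u]|.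

Definition degen (n : nat) (adj : rel 'I_n) : nat :=
  \max_(S : {set 'I_n} | S != set0) min_deg_in adj S.

(* Main.v *)
Require Import Defs.
From mathcomp Require Import all_boot all_order all_algebra.
Import GRing.Theory Num.Theory.

Lemma bigmin_le_nat (I : finType) (x : nat) (P : pred I) (F : I -> nat) j :
  P j -> (\big[minn/x]_(i | P i) F i <= F j)%N.
Proof.
move=> Pj; have := mem_index_enum j; rewrite unlock.
elim: (index_enum I) => //= a r IH; rewrite in_cons => /orP [/eqP <-|/IH h].
  by rewrite Pj geq_minl.
by case: (P a) => //; apply: leq_trans (geq_minr _ _) h.
Qed.

Lemma keycard m (s : m.-tuple bool) :
  #|[set w : 'I_m.+1 | (0 < w)%N && nth false s w.-1]| = #|[set i : 'I_m | tnth s i]|.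
Proof.
rewrite -[RHS](card_imset _ (@lift_inj m.+1 ord0)); apply: eq_card => w /=.
rewrite inE; apply/andP/imsetP.
  case=> w0 hw.
  have hl : (w.-1 < m)%N by have := ltn_ord w; rewrite -(prednK w0).
  exists (Ordinal hl); first by rewrite inE (tnth_nth false).
  by apply: ord_inj; rewrite lift0 /= prednK.
case=> i; rewrite inE => hi ->; rewrite lift0 /=; split => //.
by rewrite -(tnth_nth false).
Qed.

Lemma degen_eq m (s : m.-tuple bool) :
  degen (@tg_adj m.+1 s) = #|[set i : 'I_m | tnth s i]|.
Proof.
rewrite -keycard; set W := [set w : 'I_m.+1 | _].
apply/eqP; rewrite eqn_leq; apply/andP; split.
  apply/bigmax_leqP => S /set0Pn [x hx].
  have [u uS umin] := @arg_minnP _ x (mem S) (fun i : 'I_m.+1 => val i) hx.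
  have uS' : u \in S := uS.
  rewrite /min_deg_in; apply: leq_trans (@bigmin_le_nat _ _ (fun v => v \in S) _ u uS') _.
  apply: subset_leq_card; apply/subsetP => w; rewrite !inE /tg_adj.
  case/and3P => wS uw h.
  have uw' : (u <= w)%N by apply: umin.
  rewrite (maxn_idPr uw') in h; rewrite h andbT.
  by apply: leq_ltn_trans (leq0n u) _; rewrite ltn_neqAle uw' andbT.
pose S0 := ord0 |: W.
have W0 : ord0 \notin W by rewrite inE.
have cS0 : #|S0| = #|W|.+1 by rewrite cardsU1 W0.
have S0n : S0 != set0 by apply/set0Pn; exists ord0; rewrite setU11.
rewrite /degen; apply: leq_trans (@leq_bigmax_cond _ (fun S => S != set0) _ S0 S0n).
rewrite /min_deg_in; apply: (big_ind (fun y => #|W| <= y)%N).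
- by rewrite cS0.
- by move=> a b ha hb; rewrite leq_min ha hb.
move=> v vS.
have -> : [set u in S0 | @tg_adj m.+1 s v u] = S0 :\ v.
  apply/setP => u; rewrite in_setD1 in_set /tg_adj (eq_sym u v).
  case: (eqVneq v u) => [->|uv] /=; first by rewrite andbF.
  case uS: (u \in S0) => //=.
  move: uS vS; rewrite !inE.
  case: (leqP v u) => h.

    case/orP => [/eqP u0|/andP[] //] _.
    by move: uv h; rewrite u0 leqn0 => /eqP uv /eqP/(@val_inj _ _ _ v ord0).
  move=> _.
  case/orP => [/eqP v0|/andP[] //].
  by move: h; rewrite v0.
by have := cardsD1 v S0; rewrite vS cS0 add1n => -[->].
Qed.

Local Open Scope ring_scope.

Lemma count_sets m d :
  #|[set s : m.-tuple bool | #|[set i : 'I_m | tnth s i]| == d]| = 'C(m, d).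
Proof.
pose f (s : m.-tuple bool) := [set i : 'I_m | tnth s i].
have finj : injective f.
  move=> s t /setP e; apply: eq_from_tnth => i.
  by have := e i; rewrite !inE.
have := card_draws 'I_m d; rewrite card_ord => <-.
rewrite -(card_imset _ finj); apply: eq_card => A /=; rewrite inE.
apply/imsetP/idP.
  by case=> s; rewrite inE => h ->.
move=> h; exists [tuple i \in A | i < m]; last first.
  by apply/setP => i; rewrite !inE tnth_mktuple.
rewrite inE -(eqP h); apply/eqP; apply: eq_card => i; by rewrite !inE tnth_mktuple.
Qed.

Theorem mainTheorem13 (n d : nat) (hn : (1 <= n)%N) :
  (#|[set s : (n.-1).-tuple bool | degen (tg_adj s) == d]|%:R
     / (2 ^ n.-1)%:R : rat)
  = (1 / 2) ^+ n.-1 * ('C(n.-1, d))%:R.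
Proof.
case: n hn => [//|m] _ /=.
have -> : [set s : m.-tuple bool | degen (@tg_adj m.+1 s) == d]
        = [set s : m.-tuple bool | #|[set i : 'I_m | tnth s i]| == d].
  by apply/setP => s; rewrite !inE degen_eq.
by rewrite count_sets natrX div1r exprVn mulrC.
Qed.
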